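(* Let $\mathcal T$ be a good triangulation of $\mathcal C_G$, let $S\in\mathcal T$ be a maximal simplex and let $w\in V$. Then there are unique real numbers $\lambda^w_u$ ($u\in V(S)$) and $\lambda^w_f$ ($f\in D(S)$) such that $$e_w=\sum_{u\in V(S)}\lambda^w_u e_u+\sum_{f\in D(S)}\lambda^w_f(e_{u_f}-e_{v_f}),$$ where $(u_f,v_f)$ is the fixed ordering of the endpoints of $f$.
   Context: For a finite undirected multigraph $G=(V,E)$ (loops, parallel edges and isolated nodes allowed) with $n=|V|$, $m=|E|$, work in $\mathbb{R}^V\times\mathbb{R}^E\cong\mathbb{R}^{n+m}$ with standard basis vectors $e_u$ ($u\in V$), $e_f$ ($f\in E$). Fix for each edge $f$ an ordering $(u,v)$ of its endpoints ($u=v$ for a loop) and set $\widetilde e_f=e_u+e_v-e_f$, $\overleftarrow e_f=e_u-e_v+e_f$, $\overrightarrow e_f=-e_u+e_v+e_f$ (so for a loop $\overleftarrow e_f=\overrightarrow e_f=e_f$). The cosmological polytope $\mathcal C_G$ is the convex hull of $\{e_f,\widetilde e_f,\overleftarrow e_f,\overrightarrow e_f: f\in E\}\cup\{e_u: u\in V\}$; these are exactly its lattice points, and it is an $(n+m-1)$-dimensional polytope in the hyperplane $\sum_i x_i=1$. A good triangulation of $\mathcal C_G$ is a regular triangulation (induced by a height function on the lattice points of $\mathcal C_G$) whose vertex set is the set of all lattice points of $\mathcal C_G$ and which contains the standard simplex $\mathrm{conv}\{e_u,e_f: u\in V, f\in E\}$ as a maximal cell; simplices are identified with their vertex sets. For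 a simplex $S\in\mathcal T$: the selected nodes are $V(S)=\{u\in V: e_u\in S\}$; the squiggly edges $\widetilde E(S)=\{f:\widetilde e_f\in S\}$; the selected edges $\widehat E(S)=\{f: e_f\in S\}$; for non-loop edges $f$, $f\in\overleftarrow E(S)$ iff $\overleftarrow e_f\in S$ and $f\in\overrightarrow E(S)$ iff $\overrightarrow e_f\in S$ (loops are never in $\overleftarrow E(S)\cup\overrightarrow E(S)$); the double edges are $D(S)=(\overleftarrow E(S)\cup\overrightarrow E(S))\cap\widehat E(S)$. *)

(* Defs.v *)
From HB Require Import structures.
From mathcomp Require Import all_boot all_order all_algebra.
From mathcomp Require Import reals.
Set Implicit Arguments.
Unset Strict Implicit.
Unset Printing Implicit Defensive.
Import Order.TTheory GRing.Theory Num.Theory.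
Local Open Scope ring_scope.

(* A finite multigraph: node type V, edge type E, and for every edge f a fixed
   ordering (src f, tgt f) of its endpoints; f is a loop iff src f = tgt f. *)

Section Cosmo.
Variables (R : realType) (V E : finType) (src tgt : E -> V).

Definition vec := {ffun (V + E)%type -> R^o}.

Definition eV (u : V) : vec := [ffun i => ((i == inl u) : nat)%:R].
Definition eE (f : E) : vec := [ffun i => ((i == inr f) : nat)%:R].

Definition e_tilde (f : E) : vec := eV (src f) + eV (tgt f) - eE f.
Definition e_left  (f : E) : vec := eV (src f) - eV (tgt f) + eE f.
Definition e_right (f : E) : vec := - eV (src f) + eV (tgt f) + eE f.

(* Labels of lattice points: inl u ~ e_u ; inr (f,k) ~
   k = 0 : e_f,  k = 1 : tilde e_f,  k = 2 : left e_f,  k = 3 : right e_f. *)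
Definition lbl := (V + (E * 'I_4))%type.

Definition kE : 'I_4 := inord 0.
Definition kT : 'I_4 := inord 1.
Definition kL : 'I_4 := inord 2.
Definition kR : 'I_4 := inord 3.

Definition pt (l : lbl) : vec :=
  match l with
  | inl u => eV u
  | inr (f, k) =>
      match val k with
      | 0 => eE f
      | 1 => e_tilde f
      | 2 => e_left f
      | _ => e_right f
      end
  end.

(* For a loop, left/right e_f coincide with e_f, so these labels are not used:
   the valid labels are in bijection with the lattice points of C_G. *)
Definition valid (l : lbl) : bool :=
  match l with
  | inl _ => true
  | inr (f, k) => (val k < 2)%N || (src f != tgt f)
  end.

Definition dotv (c x : vec) : R := \sum_i c i * x i.

(* Cells of the regular subdivision induced by the height function h:
   sets of lattice points on which some lower supporting (affine) functional of
   the lifted configuration is attained.  Since all points lie in the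
   hyperplane sum x_i = 1, affine functionals are linear functionals here. *)
Definition cell (h : lbl -> R) (F : {set lbl}) : Prop :=
  exists c : vec,
    (forall l, valid l -> dotv c (pt l) <= h l) /\
    F = [set l | valid l && (dotv c (pt l) == h l)].

Definition max_cell (h : lbl -> R) (F : {set lbl}) : Prop :=
  cell h F /\ forall F', cell h F' -> F \subset F' -> F' = F.

Definition aff_indep (F : {set lbl}) : Prop :=
  forall a : lbl -> R,
    \sum_(l in F) a l = 0 ->
    \sum_(l in F) a l *: pt l = 0 ->
    forall l, l \in F -> a l = 0.

Definition std_simplex : {set lbl} :=
  [set l | match l with inl _ => true | inr (_, k) => k == kE end].

(* h induces a good triangulation: every cell is a simplex, every lattice
   point is a vertex, and the standard simplex is a maximal cell. *)
Definition good (h : lbl -> R) : Prop :=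
  [/\ forall F, cell h F -> aff_indep F,
      forall l, valid l -> cell h [set l]
    & max_cell h std_simplex].

Definition Vsel (S : {set lbl}) : {set V} := [set u | inl u \in S].
Definition Dsel (S : {set lbl}) : {set E} :=
  [set f | (src f != tgt f) &&
           ((inr (f, kL) \in S) || (inr (f, kR) \in S)) &&
           (inr (f, kE) \in S)].

Definition decomp (S : {set lbl}) (w : V) (a : V -> R) (b : E -> R) : Prop :=
  eV w = \sum_(u in Vsel S) a u *: eV u
         + \sum_(f in Dsel S) b f *: (eV (src f) - eV (tgt f)).

End Cosmo.

(* Main.v *)
Require Import Defs.
From HB Require Import structures.
From mathcomp Require Import all_boot all_order all_algebra.
From mathcomp Require Import reals.
From mathcomp Require Import lra.
Set Implicit Arguments. Unset Strict Implicit. Unset Printing Implicit Defensive.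
Import Order.TTheory GRing.Theory Num.Theory.
Local Open Scope ring_scope.
Section S.
Variables (R : realType) (V E : finType) (src tgt : E -> V).
Local Notation vec := (vec R V E).
Local Notation eV := (@eV R V E).
Local Notation eE := (@eE R V E).
Local Notation pt := (@pt R V E src tgt).
Lemma dotvD (c x y : vec) : dotv c (x + y) = dotv c x + dotv c y.
Proof. by rewrite /dotv -big_split; apply: eq_bigr => i _; rewrite ffunE mulrDr. Qed.
Lemma dotvN (c x : vec) : dotv c (- x) = - dotv c x.
Proof. by rewrite /dotv -sumrN; apply: eq_bigr => i _; rewrite ffunE mulrN. Qed.
Lemma dotvZ (c x : vec) k : dotv c (k *: x) = k * dotv c x.
Proof. by rewrite /dotv mulr_sumr; apply: eq_bigr => i _; rewrite ffunE mulrCA. Qed.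
Lemma dotv0 (c : vec) : dotv c 0 = 0.
Proof. by rewrite /dotv big1 // => i _; rewrite ffunE mulr0. Qed.
Lemma dotvlD (c d x : vec) t : dotv (c + t *: d) x = dotv c x + t * dotv d x.
Proof. by rewrite /dotv mulr_sumr -big_split; apply: eq_bigr => i _; rewrite !ffunE mulrDl mulrA. Qed.
Lemma dotvlN (d x : vec) : dotv (- d) x = - dotv d x.
Proof. by rewrite /dotv -sumrN; apply: eq_bigr => i _; rewrite ffunE mulNr. Qed.
Lemma dotv_eV (c : vec) u : dotv c (eV u) = c (inl u).
Proof. rewrite /dotv (bigD1 (inl u)) //= big1 ?addr0 => [|i /negbTE Hi]; rewrite ffunE ?eqxx ?Hi; by rewrite ?mulr1 ?mulr0. Qed.
Lemma dotv_eE (c : vec) f : dotv c (eE f) = c (inr f).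
Proof. rewrite /dotv (bigD1 (inr f)) //= big1 ?addr0 => [|i /negbTE Hi]; rewrite ffunE ?eqxx ?Hi; by rewrite ?mulr1 ?mulr0. Qed.
Lemma valkE : val kE = 0%N. Proof. by rewrite /kE /= inordK. Qed.
Lemma valkT : val kT = 1%N. Proof. by rewrite /kT /= inordK. Qed.
Lemma valkL : val kL = 2%N. Proof. by rewrite /kL /= inordK. Qed.
Lemma valkR : val kR = 3%N. Proof. by rewrite /kR /= inordK. Qed.
Lemma dot_kE (c : vec) f : dotv c (pt (inr (f, kE))) = c (inr f).
Proof. by rewrite /= valkE dotv_eE. Qed.
Lemma dot_kT (c : vec) f : dotv c (pt (inr (f, kT))) = c (inl (src f)) + c (inl (tgt f)) - c (inr f).
Proof. by rewrite /= valkT /e_tilde !(dotvD, dotvN, dotv_eV, dotv_eE). Qed.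
Lemma dot_kL (c : vec) f : dotv c (pt (inr (f, kL))) = c (inl (src f)) - c (inl (tgt f)) + c (inr f).
Proof. by rewrite /= valkL /e_left !(dotvD, dotvN, dotv_eV, dotv_eE). Qed.
Lemma dot_kR (c : vec) f : dotv c (pt (inr (f, kR))) = - c (inl (src f)) + c (inl (tgt f)) + c (inr f).
Proof. by rewrite /= valkR /e_right !(dotvD, dotvN, dotv_eV, dotv_eE). Qed.
Lemma grow (h : lbl V E -> R) (S : {set lbl V E}) (c d : vec)
  (Hc : forall l, valid src tgt l -> dotv c (pt l) <= h l)
  (HS : S = [set l | valid src tgt l && (dotv c (pt l) == h l)])
  (Hmax : forall F', cell src tgt h F' -> S \subset F' -> F' = S)
  (Hd : forall l, l \in S -> dotv d (pt l) = 0)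
  l0 (Hl0 : valid src tgt l0) (Hpos : 0 < dotv d (pt l0)) : False.
Proof.
pose P := [pred l | valid src tgt l && (0 < dotv d (pt l))].
pose F l := (h l - dotv c (pt l)) / dotv d (pt l).
have P0 : P l0 by rewrite /= Hl0.
case: (arg_minP F P0) => ls /andP[Hvs Hps] Hmin.
set t := F ls.
have t0 : 0 <= t by rewrite /t /F divr_ge0 // ?subr_ge0 ?Hc // ltW.
pose c' := c + t *: d.
have Hc' : forall l, valid src tgt l -> dotv c' (pt l) <= h l.
  move=> l Hl; rewrite dotvlD.
  case: (ltP 0 (dotv d (pt l))) => Hdl.
    have := Hmin l; rewrite /= Hl Hdl => /(_ isT); rewrite /F ler_pdivlMr // => Ht.
    by rewrite -lerBrDl.
  have := Hc l Hl; have : t * dotv d (pt l) <= 0 by rewrite mulr_ge0_le0.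
  move=> H1 H2; apply: le_trans H2; by rewrite -[leRHS]addr0 lerD2l.
have Hcell : cell src tgt h [set l | valid src tgt l && (dotv c' (pt l) == h l)] by exists c'.
have sub : S \subset [set l | valid src tgt l && (dotv c' (pt l) == h l)].
  apply/subsetP => l Hl; have := Hl; rewrite {1}HS !inE => /andP[Hv /eqP Heq].
  by rewrite Hv dotvlD Hd // mulr0 addr0 Heq eqxx.
have := Hmax _ Hcell sub => HF.
have : ls \in S.
  have Hne : dotv d (pt ls) != 0 by rewrite gt_eqF.
  rewrite -HF inE Hvs dotvlD /t /F divfK //.
  by rewrite addrC subrK eqxx.
by move/Hd => H0; rewrite H0 ltxx in Hps.
Qed.
Section Excl.
Variables (h : lbl V E -> R) (c0 c : vec) (S : {set lbl V E}).
Hypothesis Hc0 : forall l, valid src tgt l -> dotv c0 (pt l) <= h l.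
Hypothesis Hstd : std_simplex V E = [set l | valid src tgt l && (dotv c0 (pt l) == h l)].
Hypothesis Hc : forall l, valid src tgt l -> dotv c (pt l) <= h l.
Hypothesis HS : S = [set l | valid src tgt l && (dotv c (pt l) == h l)].

Lemma inS l : l \in S -> valid src tgt l /\ dotv c (pt l) = h l.
Proof. by rewrite HS inE => /andP[-> /eqP]. Qed.

Lemma c0V u : dotv c0 (pt (inl u)) = h (inl u).
Proof. have : inl u \in std_simplex V E by rewrite inE. by rewrite Hstd inE => /andP[_ /eqP]. Qed.
Lemma c0E f : dotv c0 (pt (inr (f, kE))) = h (inr (f, kE)).
Proof. have : inr (f, kE) \in std_simplex V E by rewrite inE. by rewrite Hstd inE => /andP[_ /eqP]. Qed.
Lemma c0lt f k : k != kE -> valid src tgt (inr (f, k)) -> dotv c0 (pt (inr (f, k))) < h (inr (f, k)).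
Proof.
move=> Hk Hv; rewrite lt_neqAle Hc0 // andbT.
apply/negP => /eqP Heq.
have : inr (f, k) \in std_simplex V E by rewrite Hstd inE Hv Heq eqxx.
by rewrite inE (negbTE Hk).
Qed.
Lemma cV u : c (inl u) <= c0 (inl u).
Proof. by rewrite -dotv_eV -(dotv_eV c0) -[eV u]/(pt (inl u)) c0V Hc. Qed.
Lemma cE f : c (inr f) <= c0 (inr f).
Proof. by rewrite -dot_kE -(dot_kE c0) c0E Hc //= valkE. Qed.

Lemma kne : (kT != kE) && (kL != kE) && (kR != kE).
Proof. by rewrite -!(inj_eq val_inj) valkE valkT valkL valkR. Qed.

Lemma kTE : kT != kE. Proof. by rewrite -(inj_eq val_inj) valkE ?valkT ?valkL ?valkR. Qed.
Lemma kLE : kL != kE. Proof. by rewrite -(inj_eq val_inj) valkE ?valkT ?valkL ?valkR. Qed.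
Lemma kRE : kR != kE. Proof. by rewrite -(inj_eq val_inj) valkE ?valkT ?valkL ?valkR. Qed.

Lemma ex1 f : inr (f, kL) \in S -> inr (f, kR) \in S -> False.
Proof.
move=> /inS[vL eL] /inS[vR eR].
have H4 := c0lt kLE vL; have H5 := c0lt kRE vR; have H1 := cE f; have H0 := c0E f.
rewrite dot_kL in eL; rewrite dot_kL in H4; rewrite dot_kR in eR; rewrite dot_kR in H5; rewrite dot_kE in H0.
lra.
Qed.
Lemma ex2 f : inr (f, kT) \in S -> inr (f, kL) \in S -> False.
Proof.
move=> /inS[vT eT] /inS[vL eL].
have H4 := c0lt kTE vT; have H5 := c0lt kLE vL; have H1 := cV (src f); have H0 := c0V (src f).
rewrite dot_kT in eT; rewrite dot_kT in H4; rewrite dot_kL in eL; rewrite dot_kL in H5; rewrite /= dotv_eV in H0.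
lra.
Qed.
Lemma ex3 f : inr (f, kT) \in S -> inr (f, kR) \in S -> False.
Proof.
move=> /inS[vT eT] /inS[vL eL].
have H4 := c0lt kTE vT; have H5 := c0lt kRE vL; have H1 := cV (tgt f); have H0 := c0V (tgt f).
rewrite dot_kT in eT; rewrite dot_kT in H4; rewrite dot_kR in eL; rewrite dot_kR in H5; rewrite /= dotv_eV in H0.
lra.
Qed.
Lemma ex4 f : inr (f, kT) \in S -> inr (f, kE) \in S -> False.
Proof.
move=> /inS[vT eT] /inS[vL eL].
have H4 := c0lt kTE vT; have H1 := cV (tgt f); have H0 := c0V (tgt f).
have H2 := cV (src f); have H3 := c0V (src f); have H5 := c0E f.
rewrite dot_kT in eT; rewrite dot_kT in H4; rewrite dot_kE in eL; rewrite dot_kE in H5; rewrite /= dotv_eV in H0 H3.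
lra.
Qed.
End Excl.
Definition one : vec := [ffun => 1].
Lemma dot_one l : dotv one (pt l) = 1.
Proof.
case: l => [u|[f [[|[|[|k]]] Hk]]] /=; rewrite ?/e_tilde ?/e_left ?/e_right
  !(dotvD, dotvN, dotv_eV, dotv_eE) ?ffunE //; lra.
Qed.

Lemma dotv_sum (c : vec) (P : pred (lbl V E)) (k : lbl V E -> R) (x : lbl V E -> vec) :
  dotv c (\sum_(l | P l) k l *: x l) = \sum_(l | P l) k l * dotv c (x l).
Proof.
rewrite (big_morph (dotv c) (dotvD c) (dotv0 c)).
by apply: eq_bigr => l _; rewrite dotvZ.
Qed.

Section Uniq.
Variable S : {set lbl V E}.
Definition pf f : 'I_4 := if inr (f, kL) \in S then kL else kR.
Definition sg f : R := if inr (f, kL) \in S then 1 else -1.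
Definition Acoef (da : V -> R) (db : E -> R) (l : lbl V E) : R :=
  match l with
  | inl u => if u \in Vsel S then da u else 0
  | inr (f, k) => if f \in Dsel src tgt S then
       (if k == pf f then sg f * db f else if k == kE then - (sg f * db f) else 0)
     else 0
  end.

Lemma pfE f : pf f != kE.
Proof. by rewrite /pf; case: ifP; rewrite -(inj_eq val_inj) valkE ?valkL ?valkR. Qed.

Lemma DselP f : f \in Dsel src tgt S -> [/\ inr (f, pf f) \in S, inr (f, kE) \in S & src f != tgt f].
Proof.
rewrite inE => /andP[/andP[Hst HLR] HE]; split => //.
by rewrite /pf; case: ifP => // HL; move: HLR; rewrite HL.
Qed.

Lemma sg_pt f : f \in Dsel src tgt S ->
  sg f *: (pt (inr (f, pf f)) - pt (inr (f, kE))) = eV (src f) - eV (tgt f).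
Proof.
move=> _; rewrite /sg /pf; case: ifP => _ /=; rewrite ?valkL ?valkR valkE /e_left /e_right.
  by rewrite scale1r; apply/ffunP => i; rewrite !ffunE; lra.
by rewrite scaleN1r; apply/ffunP => i; rewrite !ffunE; lra.
Qed.

Lemma Acoef_out da db l : l \notin S -> Acoef da db l = 0.
Proof.
case: l => [u|[f k]] /= Hl.
  by rewrite inE (negbTE Hl).
case: ifP => // HD; have [H1 H2 _] := DselP HD.
case: ifP => [/eqP Hk|_]; first by move: H1; rewrite -Hk (negbTE Hl).
by case: ifP => // /eqP Hk; move: H2; rewrite -Hk (negbTE Hl).
Qed.

Lemma AcoefP da db f : f \in Dsel src tgt S -> Acoef da db (inr (f, pf f)) = sg f * db f.
Proof. by move=> HD /=; rewrite HD eqxx. Qed.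
Lemma AcoefE da db f : f \in Dsel src tgt S -> Acoef da db (inr (f, kE)) = - (sg f * db f).
Proof. by move=> HD /=; rewrite HD eq_sym (negbTE (pfE f)) eqxx. Qed.

Lemma sumA da db :
  \sum_(l in S) Acoef da db l *: pt l =
  \sum_(u in Vsel S) da u *: eV u + \sum_(f in Dsel src tgt S) db f *: (eV (src f) - eV (tgt f)).
Proof.
rewrite big_mkcond /=.
rewrite (eq_bigr (fun l => Acoef da db l *: pt l)); last first.
  by move=> l _; case: ifP => // /negbT /(Acoef_out da db) ->; rewrite scale0r.
rewrite big_sumType /=; congr (_ + _).
  rewrite [RHS]big_mkcond; apply: eq_bigr => u _ /=.
  by case: ifP => //; rewrite scale0r.
rewrite (eq_bigr (fun p => Acoef da db (inr (p.1, p.2)) *: pt (inr (p.1, p.2)))); last by case.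
rewrite -(pair_bigA _ (fun f k => Acoef da db (inr (f, k)) *: pt (inr (f, k)))).
rewrite [RHS]big_mkcond; apply: eq_bigr => f _.
case: ifP => HD; last by rewrite big1 // => k _ /=; rewrite HD scale0r.
rewrite (bigD1 (pf f)) // (bigD1 kE); last by rewrite eq_sym pfE.
rewrite big1 ?addr0; last first.
  by move=> k /andP[/negbTE H1 /negbTE H2] /=; rewrite HD H1 H2 scale0r.
rewrite (AcoefP _ _ HD) (AcoefE _ _ HD).
rewrite /= addr0. rewrite scaleNr -(sg_pt HD) scalerA scalerBr mulrC.
done.
Qed.
End Uniq.
Lemma uniq0 (S : {set lbl V E}) (Hind : @aff_indep R V E src tgt S) da db :
  \sum_(u in Vsel S) da u *: eV u + \sum_(f in Dsel src tgt S) db f *: (eV (src f) - eV (tgt f)) = 0 ->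
  (forall u, u \in Vsel S -> da u = 0) /\ (forall f, f \in Dsel src tgt S -> db f = 0).
Proof.
move=> H0.
have Hv : \sum_(l in S) Acoef S da db l *: pt l = 0 by rewrite sumA.
have Hs : \sum_(l in S) Acoef S da db l = 0.
  rewrite -[RHS](dotv0 one) -Hv dotv_sum; apply: eq_bigr => l _; by rewrite dot_one mulr1.
have HA := Hind _ Hs Hv; split.
  move=> u Hu; have := HA (inl u); rewrite /= Hu; apply; by rewrite inE in Hu.
move=> f Hf; have [H1 _ _] := DselP Hf; have := HA _ H1; rewrite AcoefP // => /eqP.
rewrite mulf_eq0 => /orP[|/eqP //]; rewrite /sg; case: ifP => _.
  by rewrite oner_eq0.
by rewrite oppr_eq0 oner_eq0.
Qed.


Lemma main_sec (h : lbl V E -> R) (S : {set lbl V E}) (w : V) :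
  good src tgt h -> max_cell src tgt h S ->
  exists (a : V -> R) (b : E -> R),
    decomp src tgt S w a b /\
    forall (a' : V -> R) (b' : E -> R), decomp src tgt S w a' b' ->
      (forall u, u \in Vsel S -> a' u = a u) /\
      (forall f, f \in Dsel src tgt S -> b' f = b f).
Proof.
move=> [Hind _ [[c0 [Hc0 Hstd]] _]] [[c [Hc HS]] Hmax].
have Hi := Hind S (ex_intro _ c (conj Hc HS)).
suff [a [b Hab]] : exists (a : V -> R) (b : E -> R), decomp src tgt S w a b.
  exists a, b; split => // a' b' Hab'.
  have [] := @uniq0 S Hi (fun u => a' u - a u) (fun f => b' f - b f).
    rewrite (eq_bigr (fun u => a' u *: eV u - a u *: eV u)); last by move=> u _; rewrite scalerBl.
    rewrite [X in _ + X](eq_bigr (fun f => b' f *: (eV (src f) - eV (tgt f)) - b f *: (eV (src f) - eV (tgt f)))); last by move=> f _; rewrite scalerBl.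
    rewrite !sumrB addrACA -opprD; rewrite /decomp in Hab Hab'.
    by rewrite -Hab -Hab' subrr.
  by move=> H1 H2; split => [u Hu|f Hf]; apply/eqP; rewrite -subr_eq0; apply/eqP; [apply: H1|apply: H2].
pose U := (\sum_(u in Vsel S) <[eV u]> + \sum_(f in Dsel src tgt S) <[eV (src f) - eV (tgt f)]>)%VS.
have memU1 u : u \in Vsel S -> eV u \in U.
  move=> Hu; rewrite -[eV u]addr0; apply: memv_add; last exact: mem0v.
  by apply: (subvP (sumv_sup u Hu (subvv _))); apply: memv_line.
have memU2 f : f \in Dsel src tgt S -> eV (src f) - eV (tgt f) \in U.
  move=> Hf; rewrite -[_ - _]add0r; apply: memv_add; first exact: mem0v.
  by apply: (subvP (sumv_sup f Hf (subvv _))); apply: memv_line.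
case: (boolP (eV w \in U)) => HwU.
  move/memv_addP: HwU => [x /memv_sumP[vx Hvx ->] [y /memv_sumP[vy Hvy ->] Hw]].
  exists (fun u => vx u (inl u)), (fun f => vy f (inl (src f))).
  rewrite /decomp Hw; congr (_ + _); apply: eq_bigr => i Hi'.
    have [k ->] := vlineP _ _ (Hvx i Hi').
    by rewrite !ffunE eqxx /=; congr (_ *: _); rewrite -[RHS]/(k * 1) mulr1.
  have [k ->] := vlineP _ _ (Hvy i Hi').
  have [_ _ Hst] := DselP Hi'.
  by rewrite !ffunE !eqxx /= (inj_eq (@inl_inj _ _)) (negbTE Hst) /=; congr (_ *: _); rewrite -[RHS]/(k * (1 - 0)) subr0 mulr1.
have Hproj : eV w - projv U (eV w) != 0.
  apply: contra HwU; rewrite subr_eq0 => /eqP ->; exact: memv_proj.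
have [i Hi0] : exists i, (eV w - projv U (eV w)) i != 0.
  apply/existsP; apply: contraR Hproj => /existsPn H.
  by apply/eqP/ffunP => j; rewrite [RHS]ffunE; apply/eqP; move: (H j); rewrite negbK.
pose psi x := (x - projv U x) i.
have psi0 x : x \in U -> psi x = 0 by move=> Hx; rewrite /psi projv_id // subrr ffunE.
have psiB x y : psi (x - y) = psi x - psi y.
  by rewrite /psi linearB !ffunE; lra.
pose y u := psi (eV u).
have Hy f : f \in Dsel src tgt S -> y (src f) = y (tgt f).
  move=> Hf; apply/eqP; rewrite -subr_eq0 /y -psiB; apply/eqP; exact: psi0 (memU2 f Hf).
pose dE f := if inr (f, kE) \in S then 0 else if inr (f, kT) \in S then y (src f) + y (tgt f)
  else if inr (f, kL) \in S then y (tgt f) - y (src f)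
  else if inr (f, kR) \in S then y (src f) - y (tgt f) else 0.
pose d : vec := [ffun j => match j with inl u => y u | inr f => dE f end].
have dV u : d (inl u) = y u by rewrite ffunE.
have dEq f : d (inr f) = dE f by rewrite ffunE.
have Hd : forall l, l \in S -> dotv d (pt l) = 0.
  case=> [u|[f k]] Hl.
    rewrite /= dotv_eV dV /y psi0 //; apply: memU1; by rewrite inE.
  have : (k == kE) || (k == kT) || (k == kL) || (k == kR).
    by rewrite -!(inj_eq val_inj) valkE valkT valkL valkR; case: k {Hl} => [[|[|[|[|]]]]].
  move=> /orP[/orP[/orP[]|]|] /eqP Hk; subst k.
  - by rewrite dot_kE dEq /dE Hl.
  - have nE : inr (f, kE) \notin S by apply/negP => HE; exact: (@ex4 h c0 c S Hc0 Hstd Hc HS f Hl HE).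
    by rewrite dot_kT !dV dEq /dE (negbTE nE) Hl subrr.
  - have [Hv _] := @inS h c S HS _ Hl; rewrite /= valkL /= in Hv.
    case: (boolP (inr (f, kE) \in S)) => HE.
      have HD : f \in Dsel src tgt S by rewrite inE Hl HE Hv.
      by rewrite dot_kL !dV dEq /dE HE (Hy f HD) subrr add0r.
    have nT : inr (f, kT) \notin S by apply/negP => HT; exact: (@ex2 h c0 c S Hc0 Hstd Hc HS f HT Hl).
    by rewrite dot_kL !dV dEq /dE (negbTE HE) (negbTE nT) Hl; lra.
  - have [Hv _] := @inS h c S HS _ Hl; rewrite /= valkR /= in Hv.
    case: (boolP (inr (f, kE) \in S)) => HE.
      have HD : f \in Dsel src tgt S by rewrite inE Hl HE Hv orbT.
      by rewrite dot_kR !dV dEq /dE HE (Hy f HD) addNr add0r.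
    have nT : inr (f, kT) \notin S by apply/negP => HT; exact: (@ex3 h c0 c S Hc0 Hstd Hc HS f HT Hl).
    have nL : inr (f, kL) \notin S by apply/negP => HL; exact: (@ex1 h c0 c S Hc0 Hstd Hc HS f HL Hl).
    by rewrite dot_kR !dV dEq /dE (negbTE HE) (negbTE nT) (negbTE nL) Hl; lra.
have Hw : dotv d (pt (inl w)) != 0 by rewrite /= dotv_eV dV.
case: (ltrgtP 0 (dotv d (pt (inl w)))) => Hs.
- by case: (@grow h S c d Hc HS Hmax Hd (inl w) isT Hs).
- case: (@grow h S c (-d) Hc HS Hmax _ (inl w) isT).
    by move=> l Hl; rewrite dotvlN Hd // oppr0.
  by rewrite dotvlN oppr_gt0.
- by rewrite -Hs eqxx in Hw.
Qed.
End S.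

Theorem mainTheorem2 (R : realType) (V E : finType) (src tgt : E -> V)
  (h : lbl V E -> R) (S : {set lbl V E}) (w : V) :
  good src tgt h -> max_cell src tgt h S ->
  exists (a : V -> R) (b : E -> R),
    decomp src tgt S w a b /\
    forall (a' : V -> R) (b' : E -> R), decomp src tgt S w a' b' ->
      (forall u, u \in Vsel S -> a' u = a u) /\
      (forall f, f \in Dsel src tgt S -> b' f = b f).
Proof. exact: main_sec. Qed.
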